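(* Let $(X,(\cdot,\cdot|\cdot))$ be a 2-inner product space over $\mathbb{K}\in\{\mathbb{R},\mathbb{C}\}$, let $n$ be a positive integer, and let $x,y_1,\dots,y_n,z\in X$. Then \[ \sum_{i=1}^{n}\left|(x,y_i|z)\right|^2\le \|x|z\|^2\left\{\max_{1\le i\le n}\|y_i|z\|^2+(n-1)\max_{1\le i\ne j\le n}\left|(y_i,y_j|z)\right|\right\}. \]
   Context: A 2-inner product on a linear space $X$ of dimension greater than $1$ over $\mathbb{K}$ ($\mathbb{K}=\mathbb{R}$ or $\mathbb{C}$) is a function $(\cdot,\cdot|\cdot):X\times X\times X\to\mathbb{K}$ such that for all $x,x',y,z\in X$ and $\alpha\in\mathbb{K}$: (i) $(x,x|z)\ge 0$, and $(x,x|z)=0$ iff $x$ and $z$ are linearly dependent; (ii) $(x,x|z)=(z,z|x)$; (iii) $(y,x|z)=\overline{(x,y|z)}$; (iv) $(\alpha x,y|z)=\alpha(x,y|z)$; (v) $(x+x',y|z)=(x,y|z)+(x',y|z)$. The associated 2-norm is $\|x|z\|=\sqrt{(x,x|z)}$. The maximum $\max_{1\le i\ne j\le n}$ is over all pairs $(i,j)$ with $i\ne j$. *)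

(* Defs.v *)
From HB Require Import structures.
From mathcomp Require Import all_boot all_order all_algebra.
Set Implicit Arguments. Unset Strict Implicit. Unset Printing Implicit Defensive.
Import Order.TTheory GRing.Theory Num.Theory.
Local Open Scope ring_scope.

Definition lin_dep2 (K : numDomainType) (X : lmodType K) (x z : X) : Prop :=
  exists a b : K, (a != 0 \/ b != 0) /\ a *: x + b *: z = 0.

(* 2-inner product on X over K, with conjugation [conj] on K
   (conj = id for K real, conj = Num.conj for K complex).
   Includes the standing assumption dim X > 1. *)
Definition is_2inner_product (K : numDomainType) (conj : K -> K)
    (X : lmodType K) (ip : X -> X -> X -> K) : Prop :=
  (exists u v : X, ~ lin_dep2 u v) /\
  [/\       (forall x z : X, 0 <= ip x x z /\ (ip x x z = 0 <-> lin_dep2 x z)),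
      (forall x z : X, ip x x z = ip z z x),
      (forall x y z : X, ip y x z = conj (ip x y z)),
      (forall (a : K) (x y z : X), ip (a *: x) y z = a * ip x y z)
    & (forall x x' y z : X, ip (x + x') y z = ip x y z + ip x' y z)].

(* Main.v *)
Require Import Defs.
From HB Require Import structures.
From mathcomp Require Import all_boot all_order all_algebra.
From mathcomp Require Import ring.
Import Order.TTheory GRing.Theory Num.Theory.
Local Open Scope ring_scope.
Set Implicit Arguments.

Lemma max_ge_l {K : numDomainType} {u v : K} : 0 <= u -> 0 <= v ->
  u <= Num.max u v /\ v <= Num.max u v.
Proof.
move=> hu hv; have c : (u >=< v)%O by apply: real_comparable; apply: ger0_real.
by split; rewrite comparable_le_max // lexx ?orbT.
Qed.

Lemma bigmax_ge0 {K : numDomainType} {I : Type} (r : seq I) {P : pred I}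
  {F : I -> K} : (forall i, P i -> 0 <= F i) ->
  0 <= \big[Num.max/0]_(i <- r | P i) F i.
Proof.
move=> hF; apply: (big_ind (fun x : K => 0 <= x)) => //.
  move=> u v hu hv; have [h1 _] := max_ge_l hu hv; exact: le_trans hu h1.
Qed.

Lemma bigmax_ub (K : numDomainType) (I : eqType) (r : seq I) (P : pred I)
  (F : I -> K) : (forall i, P i -> 0 <= F i) ->
  forall i, i \in r -> P i -> F i <= \big[Num.max/0]_(j <- r | P j) F j.
Proof.
move=> hF; elim: r => // a r IH i; rewrite inE big_cons; case/orP.
  move/eqP=> -> Pa; rewrite Pa.
  exact: (proj1 (max_ge_l (hF a Pa) (bigmax_ge0 r hF))).
move=> ir Pi; case: (P a) / boolP => Pa; last exact: IH.
apply: le_trans (IH i ir Pi) _.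
exact: (proj2 (max_ge_l (hF a Pa) (bigmax_ge0 r hF))).
Qed.

Lemma quad (K : numFieldType) (a S M : K) : 0 <= a -> 0 <= S -> 0 <= M ->
  (forall t, 0 <= t -> 0 <= a - t * S - t * S + t * t * (S * M)) ->
  S <= a * M.
Proof.
move=> ha hS hM ht.
have [->|S0] := eqVneq S 0; first by rewrite mulr_ge0.
have Sp : 0 < S by rewrite lt_def S0.
have [M0|M0] := eqVneq M 0.
  have t0 : 0 <= (a + 1) / (S + S).
    by rewrite divr_ge0 // ?addr_ge0.
  have := ht _ t0; rewrite M0 mulr0 mulr0 addr0.
  have -> : a - (a + 1) / (S + S) * S - (a + 1) / (S + S) * S = -1.
    field; apply/eqP => /eqP; rewrite -mulr2n mulrn_eq0 /= (negPf S0) //.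
  by rewrite oppr_ge0 ler10.
have Mp : 0 < M by rewrite lt_def M0.
have Mi : 0 <= M^-1 by rewrite invr_ge0.
have := ht (M^-1) Mi.
have -> : a - M^-1 * S - M^-1 * S + M^-1 * M^-1 * (S * M) = a - S / M.
  by field.
by rewrite subr_ge0 ler_pdivrMr.
Qed.

Lemma amgm (K : numDomainType) (u v : K) : 0 <= u -> 0 <= v ->
  u * v *+ 2 <= u ^+ 2 + v ^+ 2.
Proof.
move=> hu hv; have := realEsqr (u - v).
rewrite rpredB ?ger0_real // sqrrB => /esym h.
rewrite -subr_ge0.
have -> : u ^+ 2 + v ^+ 2 - u * v *+ 2 = u ^+ 2 - u * v *+ 2 + v ^+ 2.
  by rewrite addrAC.
exact: h.
Qed.

Lemma generic (K : numFieldType) (cj : {rmorphism K -> K})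
  (cjK : forall c : K, `|c| ^+ 2 = c * cj c)
  (cjN : forall c : K, `|cj c| = `|c|)
  (cjR : forall c : K, 0 <= c -> cj c = c)
  (X : lmodType K) (ip : X -> X -> X -> K) :
  is_2inner_product cj ip ->
     forall (n : nat), (0 < n)%N ->
     forall (x : X) (y : 'I_n -> X) (z : X),
       \sum_(i < n) `|ip x (y i) z| ^+ 2
       <= ip x x z *
          (\big[Num.max/0]_(i < n) ip (y i) (y i) z
           + (n.-1)%:R * \big[Num.max/0]_(i < n) \big[Num.max/0]_(j < n | j != i)
                `|ip (y i) (y j) z|).
Proof.
case=> _ [hpos _ hconj hZ hD] n n0 x y z.
have ha : 0 <= ip x x z by case: (hpos x z).
have ip0 : forall v, ip 0 v z = 0.
  by move=> v; rewrite -(scale0r (0:X)) hZ mul0r.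
have ipsl : forall (I : Type) (r : seq I) (P : pred I) (f : I -> X) v,
    ip (\sum_(i <- r | P i) f i) v z = \sum_(i <- r | P i) ip (f i) v z.
  move=> I r P f v.
  exact: (big_morph (fun u => ip u v z) (fun u w => hD u w v z) (ip0 v)).
have hc : forall u v, ip u v z = cj (ip v u z) by move=> u v; apply: hconj.
have ipsr : forall (I : Type) (r : seq I) (P : pred I) (f : I -> X) u,
    ip u (\sum_(i <- r | P i) f i) z = \sum_(i <- r | P i) ip u (f i) z.
  move=> I r P f u; rewrite hc ipsl rmorph_sum; apply: eq_bigr => i _.
  by rewrite -hc.
have ipZr : forall (t : K) u v, ip u (t *: v) z = cj t * ip u v z.
  by move=> t u v; rewrite hc hZ rmorphM -hc.
have ipDr : forall u v v', ip u (v + v') z = ip u v z + ip u v' z.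
  by move=> u v v'; rewrite hc hD rmorphD -!hc.
pose c i := ip x (y i) z.
pose w := \sum_(i < n) c i *: y i.
pose S := \sum_(i < n) `|c i| ^+ 2.
pose g i j := `|ip (y i) (y j) z|.
pose A := \big[Num.max/0]_(i < n) ip (y i) (y i) z.
pose B := \big[Num.max/0]_(i < n) \big[Num.max/0]_(j < n | j != i) g i j.
pose M := A + n.-1%:R * B.
change (S <= ip x x z * M).
have hS : 0 <= S by apply: sumr_ge0 => i _; apply: exprn_ge0.
have hxw : ip x w z = S.
  rewrite ipsr; apply: eq_bigr => i _; rewrite ipZr cjK mulrC //.
have hwx : ip w x z = S by rewrite hc hxw cjR.
have hg : forall i j, g i j = g j i by move=> i j; rewrite /g hc cjN.
have hyy : forall i, 0 <= ip (y i) (y i) z by move=> i; case: (hpos (y i) z).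
have gii : forall i, g i i = ip (y i) (y i) z by move=> i; rewrite /g ger0_norm.
have hA : 0 <= A by apply: bigmax_ge0.
have hinner : forall i, 0 <= \big[Num.max/0]_(j < n | j != i) g i j.
  by move=> i; apply: bigmax_ge0 => j _; apply: normr_ge0.
have hB : 0 <= B by apply: bigmax_ge0.
have hM : 0 <= M by rewrite addr_ge0 // mulr_ge0.
have rowbound : forall i, \sum_(j < n) g i j <= M.
  move=> i; rewrite (bigD1 i) //=; apply: lerD.
    rewrite gii.
    exact: (@bigmax_ub K 'I_n (index_enum 'I_n) (fun _ => true)
              (fun i => ip (y i) (y i) z) (fun i _ => hyy i) i (mem_index_enum _) isT).
  have -> : n.-1%:R * B = \sum_(j < n | j != i) B.
    apply: (@addrI _ B).
    have e : \sum_(j < n) B = B + \sum_(j < n | j != i) B by rewrite (bigD1 i).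
    by rewrite -e sumr_const card_ord mulr_natl -mulrS prednK.
  apply: ler_sum => j ji.
  apply: le_trans (_ : \big[Num.max/0]_(j < n | j != i) g i j <= B).
    exact: (@bigmax_ub K 'I_n (index_enum 'I_n) (fun j => j != i)
              (g i) (fun j _ => normr_ge0 _) j (mem_index_enum _) ji).
  exact: (@bigmax_ub K 'I_n (index_enum 'I_n) (fun _ => true)
     (fun i => \big[Num.max/0]_(j < n | j != i) g i j) (fun i _ => hinner i) i
     (mem_index_enum _) isT).
have ww : ip w w z = \sum_(i < n) c i * \sum_(j < n) cj (c j) * ip (y i) (y j) z.
  rewrite {1}/w ipsl; apply: eq_bigr => i _; rewrite hZ ipsr; congr (_ * _).
  by apply: eq_bigr => j _; rewrite ipZr.
have hww0 : 0 <= ip w w z by case: (hpos w z).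
pose T := \sum_(i < n) \sum_(j < n) `|c i| * `|c j| * g i j.
have hwwT : ip w w z <= T.
  rewrite -(ger0_norm hww0) ww; apply: le_trans (ler_norm_sum _ _ _) _.
  apply: ler_sum => i _; rewrite normrM.
  apply: le_trans (ler_wpM2l (normr_ge0 _) (ler_norm_sum _ _ _)) _.
  rewrite mulr_sumr; apply: ler_sum => j _.
  by rewrite normrM cjN mulrA.
pose R := \sum_(i < n) `|c i| ^+ 2 * \sum_(j < n) g i j.
have hTR : T <= R.
  suff h : T *+ 2 <= R *+ 2 by move: h; rewrite lerMn2r.
  have e1 : R = \sum_(i < n) \sum_(j < n) `|c i| ^+ 2 * g i j.
    by apply: eq_bigr => i _; rewrite mulr_sumr.
  have e2 : R = \sum_(i < n) \sum_(j < n) `|c j| ^+ 2 * g i j.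
    rewrite e1 exchange_big; apply: eq_bigr => i _; apply: eq_bigr => j _.
    by rewrite hg.
  have -> : R *+ 2 = \sum_(i < n) \sum_(j < n) (`|c i| ^+ 2 + `|c j| ^+ 2) * g i j.
    rewrite mulr2n {1}e1 e2 -big_split /=; apply: eq_bigr => i _.
    rewrite -big_split /=; apply: eq_bigr => j _; by rewrite mulrDl.
  rewrite /T -sumrMnl; apply: ler_sum => i _; rewrite -sumrMnl.
  apply: ler_sum => j _; rewrite -mulrnAl; apply: ler_wpM2r; first exact: normr_ge0.
  by apply: amgm; apply: normr_ge0.
have hRS : R <= S * M.
  rewrite /R /S mulr_suml; apply: ler_sum => i _.
  by apply: ler_wpM2l; [apply: exprn_ge0; apply: normr_ge0 | apply: rowbound].
have hww : ip w w z <= S * M by apply: le_trans hwwT (le_trans hTR hRS).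
apply: quad => // t ht.
have e : ip (x - t *: w) (x - t *: w) z
         = ip x x z - t * S - t * S + t * t * ip w w z.
  rewrite -scaleNr hD hZ !ipDr !ipZr rmorphN (cjR _ ht) hxw hwx.
  ring.
have h0 : 0 <= ip (x - t *: w) (x - t *: w) z by case: (hpos (x - t *: w) z).
apply: le_trans h0 _; rewrite e lerD2l.
by apply: ler_wpM2l => //; apply: mulr_ge0.
Qed.

Theorem mainTheorem3 :
  (* real case: K any real field (e.g. R) *)
  (forall (K : realFieldType) (X : lmodType K) (ip : X -> X -> X -> K),
     is_2inner_product id ip ->
     forall (n : nat), (0 < n)%N ->
     forall (x : X) (y : 'I_n -> X) (z : X),
       \sum_(i < n) `|ip x (y i) z| ^+ 2
       <= ip x x z *
          (\big[Num.max/0]_(i < n) ip (y i) (y i) z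
           + (n.-1)%:R * \big[Num.max/0]_(i < n) \big[Num.max/0]_(j < n | j != i)
                `|ip (y i) (y j) z|))
  /\
  (* complex case: K any numeric closed field (e.g. C) with its conjugation *)
  (forall (K : numClosedFieldType) (X : lmodType K) (ip : X -> X -> X -> K),
     is_2inner_product Num.conj ip ->
     forall (n : nat), (0 < n)%N ->
     forall (x : X) (y : 'I_n -> X) (z : X),
       \sum_(i < n) `|ip x (y i) z| ^+ 2
       <= ip x x z *
          (\big[Num.max/0]_(i < n) ip (y i) (y i) z
           + (n.-1)%:R * \big[Num.max/0]_(i < n) \big[Num.max/0]_(j < n | j != i)
                `|ip (y i) (y j) z|)).
Proof.
split.
  move=> K X ip h.
  apply: (@generic K (idfun : {rmorphism K -> K})) => //.
  by move=> c; rewrite real_normK ?num_real // expr2.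
move=> K X ip h.
apply: (@generic K (Num.conj : {rmorphism K -> K})) => //.
- exact: normCK.
- exact: norm_conjC.
- by move=> c; apply: geC0_conj.
Qed.
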